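(* Let $B$ be the Meissel–Mertens constant. Assume that there exist $a>0$, $r\in\mathbb{Z}_{\geqslant 2}$ and $T_1\geqslant 2$ such that $|\pi(t)-\mathrm{li}(t)|\leqslant\frac{at}{(\log t)^r}$ for all $t\geqslant T_1$, and that there exist $b>0$, $s\in\mathbb{Z}_{\geqslant 1}$ and $T_2\geqslant 2$ such that $\sum_{p\leqslant t}\frac1p\leqslant\log\log t+B+\frac{b}{(\log t)^s}$ for all $t\geqslant T_2$. Set $\mathfrak{m}:=\frac2\pi\left(\sqrt{\pi^2-4}-2\arccos\frac2\pi\right)$. Then for all real $q\geqslant 1$, all $T,x$ with $\max(e^q,T_1,T_2)\leqslant T\leqslant x$, and all $v\in[0,1]$, $$\sum_{p\leqslant x}\frac{|\tau(p;v)|}{p}<2B+\frac{4a\zeta(r)}{(2\pi)^r}+\frac{14a}{(\log T)^r}+\frac{2b}{(\log T)^s}+E,$$ where $E=2\log\log x$ if $0\leqslant v\leqslant\frac{q}{\log x}$; $E=\frac4\pi\log\log x-\left(2-\frac4\pi\right)\log\frac vq+4\mathfrak{m}q^{-1}$ if $\frac{q}{\log x}\leqslant v\leqslant\frac{q}{\log T}$; $E=\frac4\pi\log\log x+\frac4\pi\log\frac vq+2\log\log T+4\mathfrak{m}q^{-1}$ if $\frac{q}{\log T}\leqslant v\leqslant 1$.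
   Context: For $n\in\mathbb{Z}_{\geqslant 1}$ and $v\in\mathbb{R}$, $\tau(n;v):=\sum_{d\mid n}d^{iv}$ (so $\tau(p;v)=1+p^{iv}$ for a prime $p$). Sums over $p$ run over primes; $\pi(t)$ is the prime counting function, $\mathrm{li}$ the logarithmic integral, $\zeta$ the Riemann zeta function, and $B=\lim_{x\to\infty}\left(\sum_{p\leqslant x}\frac1p-\log\log x\right)\approx 0.26149$ the Meissel–Mertens constant. *)

(* Defs.v *)
From Stdlib Require Import Reals ZArith Znumtheory Arith.
From Coquelicot Require Import Coquelicot.
Open Scope R_scope.

Definition rfloor (x : R) : Z := (up x - 1)%Z.

Definition prime_sum (f : nat -> R) (x : R) : R :=
  sum_f_R0 (fun n => if prime_dec (Z.of_nat n) then f n else 0)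
           (Z.to_nat (rfloor x)).

Definition prime_pi (t : R) : R := prime_sum (fun _ => 1) t.

(* logarithmic integral, principal value of int_0^t du / log u *)
Definition li (t : R) : R :=
  real (Lim_seq (fun n =>
    RInt (fun u => / ln u) 0 (1 - / INR (n + 2))
    + RInt (fun u => / ln u) (1 + / INR (n + 2)) t)).

Definition zeta (r : nat) : R := Series (fun n => / (INR (n + 1)) ^ r).

Definition MM_B : R :=
  real (Lim_seq (fun n => prime_sum (fun p => / INR p) (INR n) - ln (ln (INR n)))).

(* d^{iv} = exp(i v log d) *)
Definition cpow_i (d : nat) (v : R) : C := (cos (v * ln (INR d)), sin (v * ln (INR d))).

Definition tau (n : nat) (v : R) : C :=
  sum_n (fun d => if (Nat.ltb 0 d && Nat.eqb (n mod d) 0)%bool then cpow_i d v else RtoC 0) n.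

Definition frak_m : R := 2 / PI * (sqrt (PI ^ 2 - 4) - 2 * acos (2 / PI)).

(* Main.v *)
Require Import Defs.
From Stdlib Require Import Reals ZArith Znumtheory Arith Lra Lia.
From Coquelicot Require Import Coquelicot.
Open Scope R_scope.


Definition Nf (x : R) : nat := Z.to_nat (rfloor x).
Definition ptest (n : nat) : R := if prime_dec (Z.of_nat n) then 1 else 0.

Lemma Nf_spec x : 0 <= x -> INR (Nf x) <= x < INR (Nf x) + 1.
Proof.
  intros hx. unfold Nf, rfloor. destruct (archimed x) as [h1 h2].
  assert (hz : (0 <= up x - 1)%Z).
  { assert (IZR (up x) > 0) by lra. apply lt_IZR in H. lia. }
  rewrite INR_IZR_INZ, Z2Nat.id by exact hz. rewrite minus_IZR. lra.
Qed.

Lemma Nf_unique x n : INR n <= x < INR n + 1 -> Nf x = n.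
Proof.
  intros [h1 h2]. assert (hx : 0 <= x) by (pose proof (pos_INR n); lra).
  destruct (Nf_spec x hx) as [h3 h4].
  destruct (Nat.lt_trichotomy (Nf x) n) as [H|[H|H]]; auto.
  - exfalso.
    assert (INR (S (Nf x)) <= INR n) by (apply le_INR; lia).
    rewrite S_INR in H0. lra.
  - exfalso. assert (INR (S n) <= INR (Nf x)) by (apply le_INR; lia).
    rewrite S_INR in H0. lra.
Qed.

Lemma Nf_INR n : Nf (INR n) = n.
Proof. apply Nf_unique. lra. Qed.

Lemma Nf_mono x y : 0 <= x -> x <= y -> (Nf x <= Nf y)%nat.
Proof.
  intros hx hxy. destruct (Nf_spec x hx). destruct (Nf_spec y ltac:(lra)).
  destruct (le_lt_dec (Nf x) (Nf y)); auto.
  exfalso. assert (INR (S (Nf y)) <= INR (Nf x)) by (apply le_INR; lia).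
  rewrite S_INR in H3. lra.
Qed.

Lemma prime_sum_eq f x :
  prime_sum f x = sum_f_R0 (fun n => ptest n * f n) (Nf x).
Proof.
  unfold prime_sum, Nf. apply sum_eq. intros i _. unfold ptest.
  destruct (prime_dec (Z.of_nat i)); ring.
Qed.

Lemma prime_pi_eq x : prime_pi x = sum_f_R0 ptest (Nf x).
Proof.
  unfold prime_pi. rewrite prime_sum_eq. apply sum_eq. intros; ring.
Qed.

Lemma prime_sum_ext f g x : (forall n, ptest n * f n = ptest n * g n) ->
  prime_sum f x = prime_sum g x.
Proof. intros H. rewrite !prime_sum_eq. apply sum_eq. intros; auto. Qed.

Lemma ptest_01 n : ptest n = 0 \/ ptest n = 1.
Proof. unfold ptest. destruct (prime_dec _); auto. Qed.

Lemma prime_sum_le f g x : (forall n, ptest n = 1 -> f n <= g n) ->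
  prime_sum f x <= prime_sum g x.
Proof.
  intros H. rewrite !prime_sum_eq. apply sum_Rle. intros n _.
  destruct (ptest_01 n) as [e|e]; rewrite e; [lra|]. rewrite !Rmult_1_l. auto.
Qed.

Lemma prime_sum_scal c f x : prime_sum (fun n => c * f n) x = c * prime_sum f x.
Proof.
  rewrite !prime_sum_eq. rewrite scal_sum. apply sum_eq. intros; ring.
Qed.

Section Abel.
Variables (G G' : R -> R).

Definition Ab (a b : R) : Prop :=
  prime_sum (fun n => G (INR n)) b - prime_sum (fun n => G (INR n)) a
  = prime_pi b * G b - prime_pi a * G a - RInt (fun t => prime_pi t * G' t) a b
  /\ ex_RInt (fun t => prime_pi t * G' t) a b.

Hypothesis hG : forall t, 0 < t -> is_derive G t (G' t).
Hypothesis hG' : forall t, 0 < t -> continuous G' t.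

Lemma RInt_G' a b : 0 < a -> a <= b -> is_RInt G' a b (G b - G a).
Proof.
  intros ha hab.
  apply (is_RInt_derive G G'); intros x hx; rewrite Rmin_left, Rmax_right in hx by lra.
  apply hG; lra. apply hG'; lra.
Qed.

Lemma Ab_const a b c : 0 < a -> a <= b -> (forall t, a < t < b -> prime_pi t = c) ->
  RInt (fun t => prime_pi t * G' t) a b = c * (G b - G a)
  /\ ex_RInt (fun t => prime_pi t * G' t) a b.
Proof.
  intros ha hab H. pose proof (RInt_G' a b ha hab) as HI.
  assert (E : forall x, Rmin a b < x < Rmax a b -> c * G' x = prime_pi x * G' x).
  { intros x hx. rewrite Rmin_left, Rmax_right in hx by lra. rewrite H; auto. }
  assert (HI2 : is_RInt (fun t => prime_pi t * G' t) a b (c * (G b - G a))).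
  { apply (is_RInt_ext (fun t => scal c (G' t))). exact E.
    apply (is_RInt_scal _ _ _ c _ HI). }
  split. apply is_RInt_unique; auto. eexists; eauto.
Qed.

Lemma Ab_base1 a b : 0 < a -> a <= b -> Nf a = Nf b -> Ab a b.
Proof.
  intros ha hab hN.
  assert (Hc : forall t, a < t < b -> prime_pi t = prime_pi a).
  { intros t ht. rewrite !prime_pi_eq. f_equal.
    pose proof (Nf_mono a t ltac:(lra) ltac:(lra)). pose proof (Nf_mono t b ltac:(lra) ltac:(lra)). lia. }
  destruct (Ab_const a b _ ha hab Hc) as [H1 H2]. split; auto.
  rewrite H1. unfold prime_sum. fold (Nf a). fold (Nf b). rewrite hN.
  rewrite !prime_pi_eq, hN. ring.
Qed.

Lemma Ab_base2 a : 0 < a -> Ab a (INR (S (Nf a))).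
Proof.
  intros ha. destruct (Nf_spec a ltac:(lra)) as [h1 h2].
  assert (hab : a <= INR (S (Nf a))) by (rewrite S_INR; lra).
  assert (Hc : forall t, a < t < INR (S (Nf a)) -> prime_pi t = prime_pi a).
  { intros t ht. rewrite !prime_pi_eq. f_equal. rewrite S_INR in ht.
    apply Nf_unique. lra. }
  destruct (Ab_const a _ _ ha hab Hc) as [H1 H2]. split; auto.
  rewrite H1. rewrite !prime_sum_eq, !prime_pi_eq, Nf_INR, !tech5.
  ring.
Qed.

Lemma Ab_trans a b c : 0 < a -> a <= b -> b <= c -> Ab a b -> Ab b c -> Ab a c.
Proof.
  intros ha hab hbc [E1 I1] [E2 I2]. split.
  - rewrite <- (RInt_Chasles _ a b c I1 I2). unfold plus; simpl. lra.
  - eapply ex_RInt_Chasles; eauto.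
Qed.

Lemma Ab_all a b : 0 < a -> a <= b -> Ab a b.
Proof.
  intros ha hab.
  remember (Nf b - Nf a)%nat as k eqn:Hk. revert a ha hab Hk.
  induction k; intros a ha hab Hk.
  - apply Ab_base1; auto. pose proof (Nf_mono a b ltac:(lra) hab). lia.
  - pose proof (Nf_mono a b ltac:(lra) hab).
    destruct (Nf_spec a ltac:(lra)) as [h1 h2].
    destruct (Nf_spec b ltac:(lra)) as [h3 h4].
    assert (hm : INR (S (Nf a)) <= b).
    { apply Rle_trans with (INR (Nf b)); auto. apply le_INR; lia. }
    apply Ab_trans with (INR (S (Nf a))); auto. rewrite S_INR; lra.
    apply Ab_base2; auto.
    apply IHk. rewrite S_INR; lra. auto. rewrite Nf_INR. lia.
Qed.
End Abel.


Lemma ln_le_xm1 x : 0 < x -> ln x <= x - 1.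
Proof.
  intros hx. destruct (Req_dec (ln x) 0) as [e|e].
  - rewrite e. rewrite <- (exp_ln x hx), e, exp_0. lra.
  - pose proof (exp_ineq1 _ e). rewrite exp_ln in H; lra.
Qed.

Definition iln (u : R) : R := / ln u.

Lemma iln_cont u : 0 < u -> u <> 1 -> continuous iln u.
Proof.
  intros h1 h2. apply (ex_derive_continuous (K:=R_AbsRing) (V:=R_NormedModule)). unfold iln. auto_derive.
  split; auto. split; auto. intros e. rewrite <- ln_1 in e.
  apply ln_inv in e; lra.
Qed.

Lemma ln_nonpos x : x <= 0 -> ln x = 0.
Proof. intros h. unfold ln. destruct (Rlt_dec 0 x) as [h1|h1]. exfalso; lra. reflexivity. Qed.

Lemma iln_cont0 : continuous iln 0.
Proof.
  apply filterlim_locally. intros eps.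
  exists (mkposreal (exp (- / eps)) (exp_pos _)). intros y hy.
  unfold ball in *; simpl in *. unfold AbsRing_ball in *. simpl in *.
  unfold minus, plus, opp in *; simpl in *.
  unfold iln. rewrite ln_nonpos with (x := 0) by lra. rewrite Rinv_0.
  rewrite Ropp_0, Rplus_0_r in *. destruct (Rle_dec y 0) as [hy0|hy0].
  - rewrite ln_nonpos by lra. rewrite Rinv_0. change (Rabs 0 < eps). rewrite Rabs_R0. apply cond_pos.
  - change (Rabs (/ ln y) < eps). assert (0 < y) by lra. rewrite Rabs_pos_eq in hy by lra.
    assert (ln y < - / eps).
    { rewrite <- (ln_exp (- / eps)). apply ln_increasing; lra. }
    pose proof (cond_pos eps). assert (0 < / eps) by (apply Rinv_0_lt_compat; lra).
    rewrite Rabs_left. 2: apply Rinv_lt_0_compat; lra.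
    rewrite <- Rinv_opp. 
    replace (pos eps) with (/ / eps) by (field; lra).
    apply Rinv_lt_contravar. nra. lra.
Qed.

Lemma iln_exRInt a b : 1 < a -> 1 < b -> ex_RInt iln a b.
Proof.
  intros ha hb. apply (ex_RInt_continuous (V:=R_CompleteNormedModule)). intros z hz.
  apply iln_cont. pose proof (Rmin_glb_lt a b 1 ha hb). lra.
  pose proof (Rmin_glb_lt a b 1 ha hb). lra.
Qed.

Lemma iln_exRInt0 a : a < 1 -> ex_RInt iln 0 a.
Proof.
  intros ha. apply (ex_RInt_continuous (V:=R_CompleteNormedModule)). intros z hz.
  destruct (Req_dec z 0) as [->|hz0]. apply iln_cont0.
  destruct (Rlt_dec 0 z).
  - apply iln_cont; auto. assert (z <= Rmax 0 a) by lra.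
    unfold Rmax in H. destruct (Rle_dec 0 a); lra.
  - (* z < 0: iln is locally 0 *)
    assert (z < 0) by lra.
    apply continuity_pt_filterlim. 
    apply (continuity_pt_locally). intros eps. exists (mkposreal (-z) ltac:(simpl; lra)).
    intros y hy. simpl in hy. unfold iln. rewrite (ln_nonpos z) by lra.
    rewrite ln_nonpos. rewrite Rinv_0, Rminus_0_r, Rabs_R0. apply cond_pos.
    change (Rabs (y - z) < - z) in hy. apply Rabs_def2 in hy. lra.
Qed.

Lemma ln_pos' x : 1 < x -> 0 < ln x.
Proof. intros h. rewrite <- ln_1. apply ln_increasing; lra. Qed.
Lemma ln_neg' x : 0 < x -> x < 1 -> ln x < 0.
Proof. intros h h'. rewrite <- ln_1. apply ln_increasing; lra. Qed.

Lemma iln_exRInt01 a b : 0 < a < 1 -> 0 < b < 1 -> ex_RInt iln a b.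
Proof.
  intros ha hb. apply (ex_RInt_continuous (V:=R_CompleteNormedModule)). intros z hz.
  assert (0 < z < 1).
  { split. pose proof (Rmin_glb_lt a b 0). unfold Rmin, Rmax in *.
    destruct (Rle_dec a b); lra. unfold Rmin, Rmax in *. destruct (Rle_dec a b); lra. }
  apply iln_cont; lra.
Qed.

Definition kk (w : R) : R := iln (1 + w) + iln (1 - w).

Lemma kk_bound w : 0 < w <= /2 -> Rabs (kk w) <= 2.
Proof.
  intros [h1 h2]. unfold kk, iln.
  assert (hA : w / (1 + w) <= ln (1 + w)).
  { pose proof (ln_le_xm1 (/ (1 + w)) ltac:(apply Rinv_0_lt_compat; lra)).
    rewrite ln_Rinv in H by lra.
    assert (/ (1 + w) - 1 = - (w / (1 + w))) by (field; lra). lra. }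
  assert (hB : ln (1 - w) <= - w) by (pose proof (ln_le_xm1 (1 - w) ltac:(lra)); lra).
  assert (hC : - ln ((1 + w) * (1 - w)) <= w * w / ((1 + w) * (1 - w))).
  { assert (0 < (1 + w) * (1 - w)) by nra.
    pose proof (ln_le_xm1 (/ ((1 + w) * (1 - w))) ltac:(apply Rinv_0_lt_compat; lra)).
    rewrite ln_Rinv in H0 by lra.
    assert (/ ((1 + w) * (1 - w)) - 1 = w * w / ((1 + w) * (1 - w))) by (field; lra). lra. }
  rewrite ln_mult in hC by lra.
  set (A := ln (1 + w)) in *. set (B := ln (1 - w)) in *.
  assert (hA0 : 0 < A) by (unfold A; apply ln_pos'; lra).
  assert (hAB : A + B <= 0).
  { unfold A, B. rewrite <- ln_mult by lra. rewrite <- ln_1.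
    destruct (Req_dec ((1+w)*(1-w)) 1) as [e|e]. rewrite e; lra.
    left. apply ln_increasing; nra. }
  assert (hB0 : B < 0) by lra.
  set (X := - (A + B)). set (Y := - B).
  assert (e : / A + / B = X * / (A * Y)) by (unfold X, Y; field; lra).
  assert (hY : w <= Y) by (unfold Y; lra).
  assert (hAY : w / (1 + w) * w <= A * Y).
  { apply Rmult_le_compat; try lra. apply Rlt_le, Rdiv_lt_0_compat; lra. }
  assert (hnum : w * w / ((1 + w) * (1 - w)) <= 2 * (w / (1 + w) * w)).
  { assert (2 * (w / (1 + w) * w) - w * w / ((1 + w) * (1 - w))
       = w * w * (1 - 2 * w) / ((1 + w) * (1 - w))) by (field; lra).
    assert (0 <= w * w * (1 - 2 * w) / ((1 + w) * (1 - w))).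
    { apply Rmult_le_pos. assert (0 <= w * w) by nra. nra.
      apply Rlt_le, Rinv_0_lt_compat; nra. }
    lra. }
  assert (hX : 0 <= X) by (unfold X; lra).
  assert (hAYp : 0 < A * Y) by (unfold Y; nra).
  rewrite e. rewrite Rabs_pos_eq.
  2: { apply Rmult_le_pos; auto. apply Rlt_le, Rinv_0_lt_compat; auto. }
  assert (X <= 2 * (A * Y)) by (unfold X in *; lra).
  apply Rle_trans with (2 * (A * Y) * / (A * Y)).
  apply Rmult_le_compat_r; auto. apply Rlt_le, Rinv_0_lt_compat; auto.
  right; field; lra.
Qed.

Definition eps_ (n : nat) : R := / INR (n + 2).
Definition uu (t : R) (n : nat) : R :=
  RInt iln 0 (1 - eps_ n) + RInt iln (1 + eps_ n) t.

Lemma li_uu t : li t = real (Lim_seq (uu t)).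
Proof. reflexivity. Qed.

Lemma eps_bounds n : 0 < eps_ n <= / 2.
Proof.
  unfold eps_. rewrite plus_INR. simpl. pose proof (pos_INR n). split.
  apply Rinv_0_lt_compat; lra. apply Rinv_le_contravar; lra.
Qed.

Lemma cont_p w : 0 < w < 1 -> continuous (fun w => iln (1 + w)) w.
Proof.
  intros h. apply (ex_derive_continuous (K:=R_AbsRing) (V:=R_NormedModule)). unfold iln. auto_derive.
  repeat split; try lra. pose proof (ln_pos' (1+w) ltac:(lra)). lra.
Qed.
Lemma cont_m w : 0 < w < 1 -> continuous (fun w => iln (1 - w)) w.
Proof.
  intros h. apply (ex_derive_continuous (K:=R_AbsRing) (V:=R_NormedModule)). unfold iln. auto_derive.
  repeat split; try lra. pose proof (ln_neg' (1-w) ltac:(lra) ltac:(lra)). unfold Rminus in *. intro; lra.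
Qed.

Lemma ex_pm a b : 0 < a < 1 -> 0 < b < 1 ->
  ex_RInt (fun w => iln (1 + w)) a b /\ ex_RInt (fun w => iln (1 - w)) a b.
Proof.
  intros ha hb. assert (H : forall z, Rmin a b <= z <= Rmax a b -> 0 < z < 1).
  { intros z hz. unfold Rmin, Rmax in *. destruct (Rle_dec a b); lra. }
  split; apply (ex_RInt_continuous (V:=R_CompleteNormedModule)); intros z hz.
  apply cont_p; auto. apply cont_m; auto.
Qed.

Lemma uu_diff n m : uu 2 n - uu 2 m = RInt kk (eps_ n) (eps_ m).
Proof.
  destruct (eps_bounds n) as [hn1 hn2]. destruct (eps_bounds m) as [hm1 hm2].
  unfold uu.
  assert (E1 : RInt iln 0 (1 - eps_ n) = RInt iln 0 (1 - eps_ m) + RInt iln (1 - eps_ m) (1 - eps_ n)).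
  { symmetry. apply (RInt_Chasles (V:=R_CompleteNormedModule)).
    apply iln_exRInt0; lra. apply iln_exRInt01; split; lra. }
  assert (E2 : RInt iln (1 + eps_ n) 2 = RInt iln (1 + eps_ n) (1 + eps_ m) + RInt iln (1 + eps_ m) 2).
  { symmetry. apply (RInt_Chasles (V:=R_CompleteNormedModule)); apply iln_exRInt; lra. }
  assert (E3 : RInt iln (1 + eps_ n) (1 + eps_ m) = RInt (fun w => iln (1 + w)) (eps_ n) (eps_ m)).
  { pose proof (RInt_comp_lin (V:=R_CompleteNormedModule) iln 1 1 (eps_ n) (eps_ m)) as H.
    replace (1 * eps_ n + 1) with (1 + eps_ n) in H by ring.
    replace (1 * eps_ m + 1) with (1 + eps_ m) in H by ring.
    rewrite <- H by (apply iln_exRInt; lra).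
    apply RInt_ext. intros x _. change (scal 1 (iln (1 * x + 1))) with (1 * iln (1 * x + 1)).
    replace (1 * x + 1) with (1 + x) by ring. apply Rmult_1_l. }
  assert (E4 : RInt iln (1 - eps_ m) (1 - eps_ n) = RInt (fun w => iln (1 - w)) (eps_ n) (eps_ m)).
  { pose proof (RInt_comp_lin (V:=R_CompleteNormedModule) iln (-1) 1 (eps_ m) (eps_ n)) as H.
    replace (-1 * eps_ n + 1) with (1 - eps_ n) in H by ring.
    replace (-1 * eps_ m + 1) with (1 - eps_ m) in H by ring.
    rewrite <- H by (apply iln_exRInt01; split; lra).
    rewrite (RInt_ext _ (fun y => opp (iln (1 - y)))).
    2: { intros x _. change (scal (-1) (iln (-1 * x + 1))) with (-1 * iln (-1 * x + 1)).
         change (opp (iln (1 - x))) with (- iln (1 - x)). replace (-1 * x + 1) with (1 - x) by ring. change (-1 * iln (1 - x) = - iln (1 - x)). ring. }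
    rewrite (RInt_opp (V:=R_CompleteNormedModule)).
    apply (opp_RInt_swap (V:=R_CompleteNormedModule)).
    apply ex_pm; split; lra. apply ex_pm; split; lra. }
  unfold kk. rewrite (RInt_plus (V:=R_CompleteNormedModule) (fun w => iln (1 + w)) (fun w => iln (1 - w))).
  2,3: apply ex_pm; split; lra.
  change (plus ?a ?b) with (a + b).
  rewrite E1, E2, E3, E4. ring.
Qed.

Lemma kk_ex a b : 0 < a < 1 -> 0 < b < 1 -> ex_RInt kk a b.
Proof.
  intros ha hb. destruct (ex_pm a b ha hb) as [h1 h2].
  apply (ex_RInt_plus (V:=R_CompleteNormedModule) _ _ _ _ h1 h2).
Qed.

Lemma kk_int_bound a b : 0 < a <= /2 -> 0 < b <= /2 -> Rabs (RInt kk a b) <= 2 * Rabs (b - a).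
Proof.
  intros ha hb. destruct (Rle_dec a b) as [h|h].
  - rewrite (Rabs_pos_eq (b - a)) by lra.
    pose proof (abs_RInt_le_const kk a b 2 h (kk_ex a b ltac:(split;lra) ltac:(split;lra))).
    rewrite Rmult_comm. apply H. intros t ht. apply kk_bound. lra.
  - rewrite <- (opp_RInt_swap (V:=R_CompleteNormedModule)) by (apply kk_ex; split; lra).
    change (Rabs (- RInt kk b a) <= 2 * Rabs (b - a)). rewrite Rabs_Ropp.
    rewrite (Rabs_left (b - a)) by lra.
    pose proof (abs_RInt_le_const kk b a 2 ltac:(lra) (kk_ex b a ltac:(split;lra) ltac:(split;lra))).
    replace (2 * - (b - a)) with ((a - b) * 2) by ring. apply H. intros t ht. apply kk_bound. lra.
Qed.

Lemma uu_cauchy : ex_finite_lim_seq (uu 2).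
Proof.
  apply ex_lim_seq_cauchy_corr. intros eps.
  pose proof (cond_pos eps) as he.
  destruct (archimed (2 / eps)) as [a1 a2].
  assert (hpos : 0 < 2 / eps) by (apply Rdiv_lt_0_compat; lra).
  assert (hz : (0 <= up (2 / eps))%Z) by (apply le_IZR; lra).
  exists (Z.to_nat (up (2 / eps))). intros n m hn hm.
  assert (key : forall k, (Z.to_nat (up (2 / eps)) <= k)%nat -> 0 < eps_ k < eps / 2).
  { intros k hk. destruct (eps_bounds k) as [b1 b2]. split; auto.
    apply le_INR in hk. rewrite INR_IZR_INZ, Z2Nat.id in hk by auto.
    unfold eps_. rewrite plus_INR. simpl.
    replace (eps / 2) with (/ (2 / eps)) by (field; lra).
    apply Rinv_lt_contravar. apply Rmult_lt_0_compat; lra. lra. }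
  destruct (key n hn). destruct (key m hm). destruct (eps_bounds n). destruct (eps_bounds m).
  rewrite uu_diff. eapply Rle_lt_trans. apply kk_int_bound; split; lra.
  assert (Rabs (eps_ m - eps_ n) < eps / 2) by (apply Rabs_def1; lra). lra.
Qed.

Lemma li_diff t : 1 < t -> li t = li 2 + RInt iln 2 t.
Proof.
  intros ht. destruct uu_cauchy as [l hl].
  assert (H : forall n, uu t n = uu 2 n + RInt iln 2 t).
  { intros n. unfold uu. destruct (eps_bounds n).
    rewrite <- (RInt_Chasles (V:=R_CompleteNormedModule) iln (1 + eps_ n) 2 t).
    change (plus ?a ?b) with (a + b). ring. apply iln_exRInt; lra. apply iln_exRInt; lra. }
  rewrite !li_uu. rewrite (is_lim_seq_unique _ _ hl).
  rewrite (Lim_seq_ext _ _ H). rewrite (is_lim_seq_unique _ (l + RInt iln 2 t)).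
  reflexivity. apply is_lim_seq_plus'; auto. apply is_lim_seq_const.
Qed.

Lemma locally_gt1 t (P : R -> Prop) : 1 < t -> (forall y, 1 < y -> P y) -> locally t P.
Proof.
  intros ht H. exists (mkposreal (t - 1) ltac:(lra)). intros y hy.
  apply H. change (Rabs (y - t) < t - 1) in hy. apply Rabs_def2 in hy. lra.
Qed.

Lemma li_derive t : 1 < t -> is_derive li t (iln t).
Proof.
  intros ht.
  apply (is_derive_ext_loc (fun y => li 2 + RInt iln 2 y)).
  { apply locally_gt1; auto. intros y hy. symmetry. apply li_diff; auto. }
  replace (iln t) with (0 + iln t) by ring.
  apply (is_derive_plus (K:=R_AbsRing) (V:=R_NormedModule)). exact (is_derive_const (K:=R_AbsRing) (V:=R_NormedModule) (li 2) t).
  apply (is_derive_RInt (V:=R_NormedModule) iln (fun y => RInt iln 2 y) 2 t).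
  apply locally_gt1; auto. intros y hy. apply (RInt_correct (V:=R_CompleteNormedModule)).
  apply iln_exRInt; lra.
  apply iln_cont; lra.
Qed.


Lemma PI_lb3 : 8 / 3 <= PI.
Proof.
  pose proof (PI_ineq 0) as [H _]. simpl in H. unfold tg_alt, PI_tg in H. simpl in H. lra.
Qed.

Lemma PI_ub3 : PI <= 33 / 10.
Proof.
  pose proof (PI_ineq 4) as [_ H]. unfold tg_alt, PI_tg in H. simpl in H. lra.
Qed.

Definition phi (w : R) : R := 4 * sin w - 8 * w / PI.
Definition w0 : R := acos (2 / PI).

Lemma PI_pos' : 0 < PI.
Proof. exact PI_RGT_0. Qed.

Lemma two_PI_bound : 0 < 2 / PI <= 1.
Proof.
  pose proof PI_lb3. split. apply Rdiv_lt_0_compat; lra.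
  apply Rmult_le_reg_r with PI; try lra. unfold Rdiv. rewrite Rmult_assoc, Rinv_l; lra.
Qed.

Lemma w0_props : 0 <= w0 <= PI / 2 /\ cos w0 = 2 / PI.
Proof.
  pose proof two_PI_bound. unfold w0.
  assert (hc : cos (acos (2 / PI)) = 2 / PI) by (apply cos_acos; lra).
  split; auto. pose proof (acos_bound (2 / PI)). split; try lra.
  destruct (Rle_dec (acos (2 / PI)) (PI / 2)); auto.
  pose proof (cos_le_0 (acos (2 / PI)) ltac:(lra) ltac:(lra)). lra.
Qed.

Lemma MVT_sin a b : a < b -> exists c, sin b - sin a = cos c * (b - a) /\ a < c < b.
Proof.
  intros h. apply (MVT_cor2 sin cos a b h). intros c _. apply derivable_pt_lim_sin.
Qed.

Lemma phi_le_w0 w : 0 <= w <= PI / 2 -> phi w <= phi w0.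
Proof.
  intros hw. destruct w0_props as [hw0 hc]. pose proof PI_pos'.
  unfold phi.
  destruct (Rtotal_order w w0) as [h|[h|h]].
  - destruct (MVT_sin w w0 h) as [c [e hc']].
    assert (cos w0 <= cos c).
    { left. apply cos_decreasing_1; lra. }
    assert (8 * w0 / PI - 8 * w / PI = 4 * (2 / PI) * (w0 - w)) by (field; lra).
    nra.
  - subst; lra.
  - destruct (MVT_sin w0 w h) as [c [e hc']].
    assert (cos c <= cos w0).
    { left. apply cos_decreasing_1; lra. }
    assert (8 * w / PI - 8 * w0 / PI = 4 * (2 / PI) * (w - w0)) by (field; lra).
    nra.
Qed.

Lemma jordan w : 0 <= w <= PI / 2 -> 0 <= phi w.
Proof.
  intros hw. pose proof PI_pos'. unfold phi.
  destruct (Req_dec w 0) as [->|h0]. rewrite sin_0. lra.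
  destruct (Req_dec w (PI/2)) as [->|h1]. rewrite sin_PI2. assert (8 * (PI/2) / PI = 4) by (field; lra). lra.
  destruct (MVT_sin 0 w ltac:(lra)) as [c1 [e1 hc1]].
  destruct (MVT_sin w (PI/2) ltac:(lra)) as [c2 [e2 hc2]].
  rewrite sin_0 in e1. rewrite sin_PI2 in e2.
  assert (cos c2 <= cos c1) by (left; apply cos_decreasing_1; lra).
  assert (0 <= cos c2) by (apply cos_ge_0; lra).
  assert (0 <= (cos c1 - cos c2) * (w * (PI / 2 - w))).
  { apply Rmult_le_pos. lra. apply Rmult_le_pos; lra. }
  assert (sin w * (PI / 2 - w) >= w * (1 - sin w)).
  { rewrite Rminus_0_r in e1. replace (1 - sin w) with (cos c2 * (PI / 2 - w)) by lra.
    rewrite e1. nra. }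
  assert (sin w * (PI / 2) >= w) by nra.
  assert (8 * w / PI <= 4 * sin w).
  { apply Rmult_le_reg_r with PI; auto. unfold Rdiv. rewrite Rmult_assoc, Rinv_l; lra. }
  lra.
Qed.

Lemma phi_odd w : phi (- w) = - phi w.
Proof. unfold phi. rewrite sin_neg. field. pose proof PI_pos'; lra. Qed.

Lemma frak_m_eq : 2 * frak_m = phi w0.
Proof.
  pose proof PI_pos'. pose proof two_PI_bound.
  unfold frak_m, phi, w0. rewrite sin_acos by lra.
  assert (sqrt (PI ^ 2 - 4) = PI * sqrt (1 - (2 / PI)²)).
  { replace (PI ^ 2 - 4) with (PI ^ 2 * (1 - (2 / PI)²)).
    rewrite sqrt_mult. rewrite sqrt_pow2; lra. nra.
    unfold Rsqr. assert (0 <= 2/PI*(2/PI) <= 1) by nra. lra.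
    unfold Rsqr. field. lra. }
  rewrite H1. field. lra.
Qed.

Lemma phi_bound w : - PI / 2 <= w <= PI / 2 -> Rabs (phi w) <= 2 * frak_m.
Proof.
  intros hw. rewrite frak_m_eq. destruct w0_props as [hw0 _].
  pose proof (jordan w0 hw0).
  apply Rabs_le. destruct (Rle_dec 0 w).
  - pose proof (jordan w ltac:(lra)). pose proof (phi_le_w0 w ltac:(lra)). lra.
  - pose proof (jordan (- w) ltac:(lra)). pose proof (phi_le_w0 (- w) ltac:(lra)).
    rewrite phi_odd in *. lra.
Qed.

Lemma frak_m_nonneg : 0 <= frak_m.
Proof.
  destruct w0_props as [hw0 _]. pose proof (jordan w0 hw0). rewrite <- frak_m_eq in H. lra.
Qed.


Definition kof (th : R) : Z := (up ((th + PI / 2) / PI) - 1)%Z.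
Definition Hth (th : R) : R := phi (th - IZR (kof th) * PI).

Lemma kof_spec th : - PI / 2 <= th - IZR (kof th) * PI < PI / 2.
Proof.
  pose proof PI_pos'. unfold kof. destruct (archimed ((th + PI / 2) / PI)) as [h1 h2].
  rewrite minus_IZR. set (X := (th + PI / 2) / PI) in *.
  assert (th = X * PI - PI / 2) by (unfold X; field; lra).
  split; nra.
Qed.

Lemma Hth_piece th k : - PI / 2 <= th - IZR k * PI <= PI / 2 ->
  Hth th = phi (th - IZR k * PI).
Proof.
  intros h. pose proof PI_pos'. unfold Hth, kof.
  set (X := (th + PI / 2) / PI).
  assert (hX : th = X * PI - PI / 2) by (unfold X; field; lra).
  destruct (Rlt_dec (th - IZR k * PI) (PI / 2)) as [hl|hl].
  - assert (e : up X = (k + 1)%Z).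
    { symmetry. apply tech_up; rewrite plus_IZR; nra. }
    rewrite e. replace (k + 1 - 1)%Z with k by ring. reflexivity.
  - assert (e : up X = (k + 2)%Z).
    { symmetry. apply tech_up; rewrite plus_IZR; nra. }
    rewrite e. replace (k + 2 - 1)%Z with (k + 1)%Z by ring.
    assert (th - IZR k * PI = PI / 2) by lra.
    replace (th - IZR (k + 1) * PI) with (- (PI / 2)) by (rewrite plus_IZR; lra).
    rewrite H0. unfold phi. rewrite sin_neg, sin_PI2. field. lra.
Qed.

Lemma Hth_bound th : Rabs (Hth th) <= 2 * frak_m.
Proof.
  pose proof (kof_spec th). unfold Hth. apply phi_bound. lra.
Qed.

Lemma abs_cos_shift_nat (n : nat) w : Rabs (cos (w + INR n * PI)) = Rabs (cos w).
Proof.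
  induction n. simpl. rewrite Rmult_0_l, Rplus_0_r. reflexivity.
  rewrite S_INR. replace (w + (INR n + 1) * PI) with ((w + INR n * PI) + PI) by ring.
  rewrite neg_cos, Rabs_Ropp. auto.
Qed.

Lemma abs_cos_shift (k : Z) w : Rabs (cos (w + IZR k * PI)) = Rabs (cos w).
Proof.
  destruct (Z_le_gt_dec 0 k) as [h|h].
  - replace k with (Z.of_nat (Z.to_nat k)) by lia. rewrite <- INR_IZR_INZ.
    apply abs_cos_shift_nat.
  - replace k with (- Z.of_nat (Z.to_nat (- k)))%Z by lia.
    rewrite opp_IZR, <- INR_IZR_INZ.
    rewrite <- (abs_cos_shift_nat (Z.to_nat (- k)) (w + - INR (Z.to_nat (- k)) * PI)).
    f_equal. f_equal. ring.
Qed.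


Lemma sum_local (F G : nat -> R) N M : (N <= M)%nat ->
  (forall n, (N < n <= M)%nat -> F n = G n) ->
  sum_f_R0 F M - sum_f_R0 F N = sum_f_R0 G M - sum_f_R0 G N.
Proof.
  intros h H. induction M.
  - assert (N = 0%nat) by lia. subst. ring.
  - destruct (Nat.eq_dec N (S M)) as [e|e]. subst. ring.
    rewrite !tech5. rewrite (H (S M)) by lia.
    assert (sum_f_R0 F M - sum_f_R0 F N = sum_f_R0 G M - sum_f_R0 G N).
    { apply IHM. lia. intros; apply H; lia. }
    lra.
Qed.

Lemma prime_sum_local f g a b : 0 <= a -> a <= b ->
  (forall n, a < INR n <= b -> f n = g n) ->
  prime_sum f b - prime_sum f a = prime_sum g b - prime_sum g a.
Proof.
  intros ha hab H. rewrite !prime_sum_eq. apply sum_local.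
  apply Nf_mono; auto.
  intros n hn. destruct (Nf_spec a ha). destruct (Nf_spec b ltac:(lra)).
  rewrite H. auto. split.
  - assert (INR (S (Nf a)) <= INR n) by (apply le_INR; lia). rewrite S_INR in H4. lra.
  - assert (INR n <= INR (Nf b)) by (apply le_INR; lia). lra.
Qed.

Lemma ln_gt1_pos t : 1 < t -> 0 < ln t.
Proof. apply ln_pos'. Qed.

Ltac pos := repeat (first [apply Rmult_lt_0_compat | apply pow_lt | apply Rinv_0_lt_compat | lra]).

Section Piece.
Variables (v a : R) (r : nat) (T1 : R).
Hypothesis hv : 0 < v.
Hypothesis hv1 : v <= 1.
Hypothesis hT1 : 2 <= T1.
Hypothesis hpi : forall t, T1 <= t -> Rabs (prime_pi t - li t) <= a * t / (ln t) ^ r.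

Definition cc : R := 9 / 4.
Definition th (t : R) : R := v * ln t / 2.
Definition fR (t : R) : R := 2 * Rabs (cos (th t)) / t.
Definition EE (t : R) : R := prime_pi t - li t.
Definition WW (t : R) : R := EE t * fR t + Hth (th t) / (v * ln t) + 4 / PI * ln (ln t).
Definition Bd (t : R) : R := 2 * frak_m / v / (t * (ln t) ^ 2) + a * cc / (t * (ln t) ^ r).
Definition CC (al be : R) : Prop :=
  prime_sum (fun n => fR (INR n)) be - prime_sum (fun n => fR (INR n)) al
  <= WW be - WW al + RInt Bd al be.

Lemma Bd_cont t : 1 < t -> continuous Bd t.
Proof.
  intros ht. pose proof (ln_gt1_pos t ht).
  apply (ex_derive_continuous (K:=R_AbsRing) (V:=R_NormedModule)). unfold Bd. auto_derive.
  repeat split; try lra; apply Rgt_not_eq; pos.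
Qed.

Lemma Bd_ex al be : 1 < al -> 1 < be -> ex_RInt Bd al be.
Proof.
  intros h1 h2. apply (ex_RInt_continuous (V:=R_CompleteNormedModule)). intros z hz.
  apply Bd_cont. pose proof (Rmin_glb_lt al be 1 h1 h2). lra.
Qed.

Lemma CC_trans al be ga : 1 < al -> al <= be -> be <= ga -> CC al be -> CC be ga -> CC al ga.
Proof.
  intros h1 h2 h3 H1 H2. unfold CC in *.
  rewrite <- (RInt_Chasles (V:=R_CompleteNormedModule) Bd al be ga) by (apply Bd_ex; lra).
  change (plus ?x ?y) with (x + y). lra.
Qed.

Section K.
Variable k : Z.
Definition ww (t : R) : R := th t - IZR k * PI.
Definition GG (t : R) : R := 2 * cos (ww t) / t.
Definition GG' (t : R) : R := (- v * sin (ww t) - 2 * cos (ww t)) / t ^ 2.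
Definition Phi (t : R) : R := phi (ww t) / v.
Definition RR (t : R) : R := Phi t / ln t + 4 / PI * ln (ln t).
Definition QQ (t : R) : R := li t * GG t - RR t.
Definition DD (t : R) : R := li t * GG' t + Phi t / (t * (ln t) ^ 2).

Lemma GG_der t : 0 < t -> is_derive GG t (GG' t).
Proof.
  intros ht. unfold GG, GG', ww, th. auto_derive. repeat split; lra. unfold Rminus, Rdiv. field. lra.
Qed.

Lemma GG'_cont t : 0 < t -> continuous GG' t.
Proof.
  intros ht. apply (ex_derive_continuous (K:=R_AbsRing) (V:=R_NormedModule)).
  unfold GG', ww, th. auto_derive. repeat split; try lra; apply Rgt_not_eq; pos.
Qed.

Lemma RR_der t : 1 < t ->
  is_derive RR t (2 * cos (ww t) / (t * ln t) - Phi t / (t * (ln t) ^ 2)).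
Proof.
  intros ht. pose proof (ln_gt1_pos t ht). pose proof PI_pos'.
  unfold RR, Phi, phi, ww, th. auto_derive. repeat split; try lra. unfold Rminus, Rdiv. field. repeat split; lra.
Qed.

Lemma li_cont t : 1 < t -> continuous li t.
Proof.
  intros ht. apply (ex_derive_continuous (K:=R_AbsRing) (V:=R_NormedModule)).
  eexists. apply li_derive; auto.
Qed.

Lemma QQ_der t : 1 < t -> is_derive QQ t (DD t).
Proof.
  intros ht. pose proof (ln_gt1_pos t ht).
  pose proof (is_derive_mult li GG t _ _ (li_derive t ht) (GG_der t ltac:(lra)) Rmult_comm) as H1.
  pose proof (is_derive_minus _ _ t _ _ H1 (RR_der t ht)) as H2.
  assert (e : minus (plus (mult (iln t) (GG t)) (mult (li t) (GG' t)))
       (2 * cos (ww t) / (t * ln t) - Phi t / (t * (ln t) ^ 2)) = DD t).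
  { unfold minus, plus, mult, opp; simpl. unfold DD, GG, iln. field. split; lra. }
  rewrite <- e.
  unfold QQ. eapply is_derive_ext. 2: apply H2. intros; reflexivity.
Qed.

Lemma DD_cont t : 1 < t -> continuous DD t.
Proof.
  intros ht. pose proof (ln_gt1_pos t ht). unfold DD.
  apply (continuous_plus (fun t => li t * GG' t) (fun t => Phi t / (t * ln t ^ 2))).
  apply (continuous_mult li GG'). apply li_cont; auto. apply GG'_cont; lra.
  apply (ex_derive_continuous (K:=R_AbsRing) (V:=R_NormedModule)).
  unfold Phi, phi, ww, th. auto_derive. repeat split; try lra; apply Rgt_not_eq; pos.
Qed.

Lemma GG'_bound t : 0 < t -> Rabs (GG' t) <= cc / t ^ 2.
Proof.
  intros ht. unfold GG', cc. unfold Rdiv. rewrite Rabs_mult.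
  rewrite (Rabs_pos_eq (/ t ^ 2)) by (apply Rlt_le; pos).
  apply Rmult_le_compat_r. apply Rlt_le; pos.
  set (s := sin (ww t)). set (c := cos (ww t)).
  assert (hsc : s * s + c * c = 1) by (unfold s, c; rewrite <- (sin2_cos2 (ww t)); unfold Rsqr; ring).
  assert (hsq : (- v * s - 2 * c) * (- v * s - 2 * c) <= 5).
  { assert ((- v * s - 2 * c) * (- v * s - 2 * c) + (2 * s - v * c) * (2 * s - v * c)
            = (v * v + 4) * (s * s + c * c)) by ring.
    pose proof (Rle_0_sqr (2 * s - v * c)) as Hs2. unfold Rsqr in Hs2. rewrite hsc in H. assert (v * v <= 1) by nra. lra. }
  set (x := - v * s - 2 * c) in *.
  apply Rabs_le. split.
  - destruct (Rle_dec (- (9 * / 4)) x); auto. exfalso. nra.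
  - destruct (Rle_dec x (9 * / 4)); auto. exfalso. nra.
Qed.
End K.

Lemma ww_mono k t1 t2 : 0 < t1 -> t1 <= t2 -> ww k t1 <= ww k t2.
Proof.
  intros h1 h2. unfold ww, th. destruct (Req_dec t1 t2) as [->|h]. lra.
  assert (ln t1 < ln t2) by (apply ln_increasing; lra). nra.
Qed.

Lemma piece al be k : T1 <= al -> al <= be -> - PI / 2 <= ww k al -> ww k be <= PI / 2 ->
  CC al be.
Proof.
  intros h1 h2 h3 h4. pose proof PI_pos'.
  assert (hw : forall t, al <= t <= be -> - PI / 2 <= ww k t <= PI / 2).
  { intros t ht. pose proof (ww_mono k al t ltac:(lra) ltac:(lra)).
    pose proof (ww_mono k t be ltac:(lra) ltac:(lra)). lra. }
  assert (hf : forall t, al <= t <= be -> fR t = GG k t).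
  { intros t ht. unfold fR, GG. f_equal. f_equal.
    replace (th t) with (ww k t + IZR k * PI) by (unfold ww; ring).
    rewrite abs_cos_shift. apply Rabs_pos_eq. apply cos_ge_0; destruct (hw t ht); lra. }
  assert (hH : forall t, al <= t <= be -> Hth (th t) / (v * ln t) = Phi k t / ln t).
  { intros t ht. rewrite (Hth_piece (th t) k) by (destruct (hw t ht); unfold ww in *; lra).
    unfold Phi, ww. field. split; apply Rgt_not_eq; first [apply ln_gt1_pos; lra | lra]. }
  destruct (Ab_all (GG k) (GG' k) (GG_der k) (GG'_cont k) al be ltac:(lra) h2) as [HA HAi].
  set (I1 := RInt (fun t => prime_pi t * GG' k t) al be) in *.
  assert (HQ : is_RInt (DD k) al be (QQ k be - QQ k al)).
  { apply (is_RInt_derive (V:=R_CompleteNormedModule) (QQ k) (DD k)); intros x hx;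
    rewrite Rmin_left, Rmax_right in hx by lra.
    apply QQ_der; lra. apply DD_cont; lra. }
  assert (HM := is_RInt_minus (V:=R_NormedModule) _ _ _ _ _ _ HQ (RInt_correct _ _ _ HAi)).
  assert (HB := RInt_correct _ _ _ (Bd_ex al be ltac:(lra) ltac:(lra))).
  assert (Hle := is_RInt_le _ _ _ _ _ _ h2 HM HB).
  assert (Hle' : minus (QQ k be - QQ k al) I1 <= RInt Bd al be).
  { apply Hle. intros t ht.
    assert (hT : T1 <= t) by lra. assert (ht1 : 1 < t) by lra.
    pose proof (ln_gt1_pos t ht1) as hl.
    change (minus ?x ?y) with (x - y). unfold DD, Bd.
    assert (E1 : Phi k t / (t * ln t ^ 2) <= 2 * frak_m / v / (t * ln t ^ 2)).
    { unfold Rdiv. apply Rmult_le_compat_r. apply Rlt_le; pos.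
      unfold Phi. unfold Rdiv. apply Rmult_le_compat_r. apply Rlt_le; pos.
      pose proof (phi_bound (ww k t) ltac:(destruct (hw t ltac:(lra)); lra)).
      apply Rabs_le_between in H0. lra. }
    assert (E2 : - ((prime_pi t - li t) * GG' k t) <= a * cc / (t * ln t ^ r)).
    { eapply Rle_trans. apply Rle_abs. rewrite Rabs_Ropp, Rabs_mult.
      eapply Rle_trans. apply Rmult_le_compat. apply Rabs_pos. apply Rabs_pos.
      apply hpi; auto. apply GG'_bound; lra.
      right. field. split. apply pow_nonzero; lra. lra. }
    lra. }
  unfold CC.
  rewrite (prime_sum_local (fun n => fR (INR n)) (fun n => GG k (INR n)) al be) by (try lra; intros; apply hf; lra).
  rewrite HA. unfold WW.
  rewrite (hf be), (hf al), (hH be), (hH al) by lra.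
  change (minus ?x ?y) with (x - y) in Hle'.
  unfold QQ, RR, EE in *. lra.
Qed.

Lemma th_exp X : th (exp (2 * X / v)) = X.
Proof. unfold th. rewrite ln_exp. field. lra. Qed.

Lemma th_lt_inv t1 t2 : 0 < t1 -> 0 < t2 -> th t1 < th t2 -> t1 < t2.
Proof.
  intros h1 h2 h. destruct (Rlt_dec t1 t2); auto. exfalso.
  assert (t2 <= t1) by lra. pose proof (ww_mono 0 t2 t1 h2 H). unfold ww in H0. lra.
Qed.

Lemma CC_all al be : T1 <= al -> al <= be -> CC al be.
Proof.
  intros h1 h2. pose proof PI_pos'.
  set (k0 := kof (th al)).
  assert (hk0 : - PI / 2 <= ww k0 al < PI / 2) by (unfold ww, k0; apply kof_spec).
  assert (aux : forall n be, al <= be -> ww k0 be <= PI / 2 + INR n * PI -> CC al be).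
  { induction n; intros b hb hwb.
    - apply (piece al b k0); try lra. simpl in hwb. lra.
    - destruct (Rle_dec (ww k0 b) (PI / 2 + INR n * PI)) as [hh|hh].
      + apply IHn; auto.
      + set (X := PI / 2 + (IZR k0 + INR n) * PI).
        set (z := exp (2 * X / v)).
        assert (hz : th z = X) by apply th_exp.
        assert (hz0 : 0 < z) by apply exp_pos.
        pose proof (pos_INR n).
        assert (hal : al <= z).
        { left. apply th_lt_inv; try lra. rewrite hz. unfold ww in hk0. unfold X. nra. }
        assert (hzb : z <= b).
        { left. apply th_lt_inv; try lra. rewrite hz. unfold ww in hh. unfold X. lra. }
        apply CC_trans with z; try lra.
        * apply IHn; auto. unfold ww. rewrite hz. unfold X. lra.
        * apply (piece z b (k0 + Z.of_nat n + 1)); try lra.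
          unfold ww. rewrite hz. unfold X. rewrite !plus_IZR, <- INR_IZR_INZ. lra.
          unfold ww in *. rewrite !plus_IZR, <- INR_IZR_INZ. rewrite S_INR in hwb. lra. }
  destruct (archimed (ww k0 be / PI)) as [a1 a2].
  apply (aux (Z.to_nat (up (ww k0 be / PI))) be h2).
  destruct (Z_le_gt_dec 0 (up (ww k0 be / PI))) as [hz|hz].
  - rewrite INR_IZR_INZ, Z2Nat.id by auto.
    assert (ww k0 be / PI * PI = ww k0 be) by (field; lra). nra.
  - replace (Z.to_nat (up (ww k0 be / PI))) with 0%nat by lia. simpl.
    assert (hz2 : (up (ww k0 be / PI) < 0)%Z) by lia. apply IZR_lt in hz2. assert (ww k0 be / PI < 0) by lra.
    assert (ww k0 be < 0).
    { destruct (Rlt_dec (ww k0 be) 0); auto. exfalso.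
      assert (0 <= ww k0 be / PI) by (apply Rdiv_le_0_compat; lra). lra. }
    lra.
Qed.
End Piece.


Lemma sum_n_single (F : nat -> C) N : (1 <= N)%nat ->
  (forall d, (d <= N)%nat -> d <> 1%nat -> F d = RtoC 0) -> sum_n F N = F 1%nat.
Proof.
  intros hN H. induction N. lia.
  rewrite sum_Sn. destruct (Nat.eq_dec N 0) as [->|hn].
  - rewrite sum_O. rewrite (H 0%nat) by lia.
    change (plus (RtoC 0) (F 1%nat) = F 1%nat). apply (plus_zero_l (G:=C_AbelianMonoid)).
  - rewrite IHN by (try lia; intros; apply H; lia). rewrite (H (S N)) by lia.
    apply (plus_zero_r (G:=C_AbelianMonoid)).
Qed.

Lemma prime_nat_div (p d : nat) : prime (Z.of_nat p) -> (2 <= d < p)%nat -> (p mod d <> 0)%nat.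
Proof.
  intros [hp H] hd e. apply Nat.Private_NLcmProp.mod_divide in e; [|lia].
  destruct e as [k hk].
  assert (hdz : (Z.of_nat d | Z.of_nat p)%Z).
  { exists (Z.of_nat k). rewrite hk. apply Nat2Z.inj_mul. }
  specialize (H (Z.of_nat d) ltac:(lia)).
  destruct H as [_ _ H]. assert (h1 : (Z.of_nat d | 1)%Z) by (apply H; auto; apply Z.divide_refl).
  apply Z.divide_pos_le in h1; lia.
Qed.

Lemma tau_prime p v : prime (Z.of_nat p) ->
  tau p v = Cplus (RtoC 1) (cpow_i p v).
Proof.
  intros hp. assert (hp2 : (2 <= p)%nat) by (destruct hp as [h _]; lia).
  unfold tau. destruct p as [|p']. lia.
  rewrite sum_Sn. rewrite (sum_n_single _ p'); try lia.
  - assert (e1 : andb (Nat.ltb 0 1) (Nat.eqb (S p' mod 1) 0) = true) by (rewrite Nat.mod_1_r; reflexivity).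
    assert (e2 : andb (Nat.ltb 0 (S p')) (Nat.eqb (S p' mod S p') 0) = true).
    { rewrite Nat.Div0.mod_same. apply andb_true_intro. split. apply Nat.ltb_lt; lia. reflexivity. }
    rewrite e1, e2.
    unfold cpow_i at 1. rewrite INR_1, ln_1, Rmult_0_r, cos_0, sin_0. reflexivity.
  - intros d hd hd1. destruct d as [|d']. reflexivity.
    replace (Nat.ltb 0 (S d')) with true by (symmetry; apply Nat.ltb_lt; lia).
    replace (Nat.eqb (S p' mod S d') 0) with false. reflexivity.
    symmetry. apply Nat.eqb_neq. apply prime_nat_div; auto. lia.
Qed.

Lemma Cmod_tau_prime p v : prime (Z.of_nat p) ->
  Cmod (tau p v) = 2 * Rabs (cos (v * ln (INR p) / 2)).
Proof.
  intros hp. rewrite tau_prime by auto. unfold Cmod, cpow_i. simpl fst. simpl snd.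
  set (x := v * ln (INR p) / 2).
  replace (v * ln (INR p)) with (2 * x) by (unfold x; field).
  rewrite cos_2a_cos, sin_2a.
  replace ((1 + (2 * cos x * cos x - 1)) ^ 2 + (0 + 2 * sin x * cos x) ^ 2)
    with (Rsqr (2 * cos x)).
  rewrite sqrt_Rsqr_abs, Rabs_mult, Rabs_pos_eq by lra. reflexivity.
  unfold Rsqr. pose proof (sin2_cos2 x). unfold Rsqr in H. 
  replace (sin x * sin x) with (1 - cos x * cos x) by lra. ring_simplify.
  replace (sin x ^ 2) with (1 - cos x ^ 2) by (simpl; lra). ring.
Qed.

Definition tel (n : nat) : R := / INR (n + 1) - / INR (n + 2).

Lemma sum_tel N : sum_n tel N = 1 - / INR (N + 2).
Proof.
  induction N. rewrite sum_O. unfold tel. simpl. field.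
  rewrite sum_Sn, IHN. change (plus ?x ?y) with (x + y). unfold tel.
  replace (S N + 1)%nat with (N + 2)%nat by lia. match goal with |- ?a = ?b => change (@eq R a b) end. ring.
Qed.

Lemma is_series_tel : is_series tel 1.
Proof.
  assert (H : is_lim_seq (fun N => 1 - / INR (N + 2)) 1).
  { replace (Finite 1) with (Rbar_minus 1 0) by (simpl; f_equal; ring).
    apply (is_lim_seq_minus' (fun _ => 1) (fun N => / INR (N + 2)) 1 0).
    apply is_lim_seq_const.
    apply (is_lim_seq_incr_n (fun N => / INR N) 2 0).
    replace (Finite 0) with (Rbar_inv p_infty) by reflexivity.
    apply is_lim_seq_inv. apply is_lim_seq_INR. discriminate. }
  apply (is_lim_seq_ext _ _ _ (fun N => eq_sym (sum_tel N))) in H. exact H.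
Qed.

Definition zt (r : nat) (n : nat) : R := / (INR (n + 1)) ^ r.

Lemma zt_bound r n : (2 <= r)%nat -> 0 <= zt r n <= 2 * tel n.
Proof.
  intros hr. unfold zt, tel. rewrite !plus_INR. simpl. pose proof (pos_INR n).
  assert (h1 : 1 <= INR n + 1) by lra.
  assert (hp : (INR n + 1) ^ 2 <= (INR n + 1) ^ r).
  { apply Rle_pow; auto. }
  split. apply Rlt_le, Rinv_0_lt_compat, pow_lt; lra.
  apply Rle_trans with (/ (INR n + 1) ^ 2).
  apply Rinv_le_contravar. apply pow_lt; lra. auto.
  assert (2 * (/ (INR n + 1) - / (INR n + 1 + 1)) - / (INR n + 1) ^ 2
          = (INR n) / ((INR n + 1) ^ 2 * (INR n + 2))) by (field; lra).
  assert (0 <= INR n / ((INR n + 1) ^ 2 * (INR n + 2))).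
  { apply Rdiv_le_0_compat; auto. apply Rmult_lt_0_compat. apply pow_lt; lra. lra. }
  replace (INR n + (1 + 1)) with (INR n + 1 + 1) by ring. lra.
Qed.

Lemma zt_ex r : (2 <= r)%nat -> ex_series (zt r).
Proof.
  intros hr. apply (ex_series_le (K:=R_AbsRing) (V:=R_CompleteNormedModule) _ (fun n => 2 * tel n)).
  intros n. change (norm (zt r n)) with (Rabs (zt r n)). destruct (zt_bound r n hr).
  rewrite Rabs_pos_eq; auto.
  apply (ex_series_scal_l (V:=R_CompleteNormedModule) 2 tel). exists 1. apply is_series_tel.
Qed.

Lemma zeta_eq r : zeta r = Series (zt r).
Proof. reflexivity. Qed.

Lemma zeta_lb r N : (2 <= r)%nat -> sum_f_R0 (zt r) N <= zeta r.
Proof.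
  intros hr. rewrite zeta_eq. rewrite (Series_incr_n (zt r) (S N)) by (try lia; apply zt_ex; auto).
  simpl pred.
  assert (0 <= Series (fun k => zt r (S N + k))).
  { assert (e : Series (fun k => 0 * zt r (S N + k)) = 0).
    { rewrite Series_scal_l. ring. }
    rewrite <- e. apply Series_le. intros n. destruct (zt_bound r (S N + n) hr). split; lra.
    apply (ex_series_incr_n (zt r) (S N)). apply zt_ex; auto. }
  lra.
Qed.

Lemma zeta_ge1 r : (2 <= r)%nat -> 1 <= zeta r.
Proof.
  intros hr. pose proof (zeta_lb r 0 hr). simpl in H. unfold zt in H. simpl in H.
  rewrite pow1 in H. rewrite Rinv_1 in H. lra.
Qed.

Lemma zeta2_lb : 146 / 100 <= zeta 2.
Proof.
  pose proof (zeta_lb 2 4 ltac:(lia)). unfold zt in H. simpl in H. lra.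
Qed.

Lemma numeric_core (r : nat) (L Z : R) : (2 <= r)%nat -> 1 <= L -> 1 <= Z ->
  (r = 2%nat -> 146 / 100 <= Z) ->
  cc * L / INR (r - 1) < 10 + 4 * Z * (L / (2 * PI)) ^ r.
Proof.
  intros hr hL hZ hZ2. pose proof PI_ub3. pose proof PI_lb3. unfold cc.
  set (X := L / (2 * PI)).
  assert (hX : X * (2 * PI) = L) by (unfold X; field; lra).
  assert (hX0 : 0 < X) by (unfold X; apply Rdiv_lt_0_compat; lra).
  clearbody X.
  destruct r as [|[|[|[|r']]]]; try lia.
  - specialize (hZ2 eq_refl). simpl. replace (L / 1) with L by field.
    assert (L <= 66 / 10 * X) by nra.
    assert (hZX : 146 / 100 * (X * X) <= Z * (X * X)) by (apply Rmult_le_compat_r; nra).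
    pose proof (Rle_0_sqr (X - 127 / 100)) as hsq. unfold Rsqr in hsq.
    replace (9 / 4 * L / 1) with (9 / 4 * L) by field.
    replace (X * (X * 1)) with (X * X) by ring.
    nra.
  - replace (INR (3 - 1)) with 2 by (simpl; ring).
    replace (X ^ 3) with (X * X * X) by ring.
    assert (L <= 66 / 10 * X) by nra.
    assert (hZX : X * X * X <= Z * (X * X * X)).
    { assert (0 < X * X * X) by (repeat apply Rmult_lt_0_compat; lra).
      assert (0 <= (Z - 1) * (X * X * X)) by (apply Rmult_le_pos; lra). lra. }
    pose proof (Rle_0_sqr (X - 8 / 10)) as h1. unfold Rsqr in h1.
    assert (h1' : 0 <= X * ((X - 8 / 10) * (X - 8 / 10))) by (apply Rmult_le_pos; lra).
    pose proof (Rle_0_sqr (X - 78 / 100)) as h2. unfold Rsqr in h2.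
    nra.
  - replace (S (S (S (S r'))) - 1)%nat with (S (S (S r'))) by lia.
    assert (hI : 3 <= INR (S (S (S r')))) by (rewrite !S_INR; pose proof (pos_INR r'); lra).
    assert (hq : 9 / 4 * L / INR (S (S (S r'))) <= 3 / 4 * L).
    { apply Rmult_le_reg_r with (INR (S (S (S r')))). lra.
      unfold Rdiv. rewrite Rmult_assoc, Rinv_l by lra. nra. }
    assert (hpos : 0 <= X ^ S (S (S (S r')))) by (apply pow_le; lra).
    destruct (Rle_dec L 13) as [h1|h1].
    + nra.
    + assert (hX1 : 1 <= X) by nra.
      assert (HY : X ^ 4 <= X ^ S (S (S (S r')))) by (apply Rle_pow; auto; lia).
      assert (X * X >= 3) by nra.
      assert (H4 : X ^ 4 >= 3 * X) by (replace (X ^ 4) with (X * X * (X * X)) by ring; nra).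
      assert (hLX : L <= 66 / 10 * X) by nra.
      set (Y := X ^ S (S (S (S r')))) in *. clearbody Y.
      assert (Y <= Z * Y) by (assert (0 <= (Z - 1) * Y) by (apply Rmult_le_pos; lra); lra).
      lra.
Qed.



Lemma numeric (a L : R) (r : nat) : 0 < a -> 1 <= L -> (2 <= r)%nat ->
  4 * a / L ^ r + a * cc / (INR (r - 1) * L ^ (r - 1))
  < 14 * a / L ^ r + 4 * a * zeta r / (2 * PI) ^ r.
Proof.
  intros ha hL hr. pose proof PI_pos'.
  assert (hZ2 : r = 2%nat -> 146 / 100 <= zeta r) by (intros ->; apply zeta2_lb).
  pose proof (numeric_core r L (zeta r) hr hL (zeta_ge1 r hr) hZ2) as HN.
  destruct r as [|r1]. lia.
  replace (S r1 - 1)%nat with r1 in * by lia.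
  assert (hI : 0 < INR r1) by (apply lt_0_INR; lia).
  assert (hP : 0 < L ^ r1) by pos.
  assert (hQ : 0 < (2 * PI) ^ S r1) by (apply pow_lt; lra).
  assert (e : (L / (2 * PI)) ^ S r1 = L ^ S r1 / (2 * PI) ^ S r1).
  { unfold Rdiv. rewrite Rpow_mult_distr, pow_inv. reflexivity. }
  rewrite e in HN. simpl pow in *.
  assert (hLr : 0 < L * L ^ r1) by pos.
  assert (H' : a / (L * L ^ r1) * (cc * L / INR r1)
             < a / (L * L ^ r1) * (10 + 4 * zeta (S r1) * (L * L ^ r1 / (2 * PI * (2 * PI) ^ r1)))).
  { apply Rmult_lt_compat_l. apply Rdiv_lt_0_compat; lra. exact HN. }
  assert (e1 : a / (L * L ^ r1) * (cc * L / INR r1) = a * cc / (INR r1 * L ^ r1)) by (field; lra).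
  assert (e2 : a / (L * L ^ r1) * (10 + 4 * zeta (S r1) * (L * L ^ r1 / (2 * PI * (2 * PI) ^ r1)))
             = 10 * a / (L * L ^ r1) + 4 * a * zeta (S r1) / (2 * PI * (2 * PI) ^ r1)).
  { field. split; [apply pow_nonzero; lra|]. split; [lra|]. split; [apply pow_nonzero|]; lra. }
  rewrite e1, e2 in H'.
  assert (4 * a / (L * L ^ r1) + 10 * a / (L * L ^ r1) = 14 * a / (L * L ^ r1)) by (field; lra).
  lra.
Qed.

Section Fin.
Variables (v a : R) (r : nat).
Hypothesis hv : 0 < v.
Hypothesis hr : (2 <= r)%nat.

Definition FB (t : R) : R := - (2 * frak_m / v) / ln t - a * cc / (INR (r - 1) * (ln t) ^ (r - 1)).

Lemma FB_der t : 1 < t -> is_derive FB t (Bd v a r t).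
Proof.
  intros ht. pose proof (ln_gt1_pos t ht) as hl. unfold FB, Bd.
  destruct r as [|[|r2]]; try lia. replace (S (S r2) - 1)%nat with (S r2) by lia.
  assert (hI : 0 < INR (S r2)) by (apply lt_0_INR; lia).
  auto_derive;
  change (match r2 with 0%nat => 1 | S _ => INR r2 + 1 end) with (INR (S r2)) in *.
  - repeat split; try lra; apply Rgt_not_eq; pos.
  - simpl pow. field. repeat split; try lra; apply Rgt_not_eq; pos.
Qed.

Lemma RInt_Bd y x : 1 < y -> y <= x -> RInt (Bd v a r) y x = FB x - FB y.
Proof.
  intros hy hyx. apply is_RInt_unique.
  apply (is_RInt_derive (V:=R_CompleteNormedModule) FB (Bd v a r)); intros z hz;
  rewrite Rmin_left, Rmax_right in hz by lra.
  apply FB_der; lra. apply Bd_cont; lra.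
Qed.
End Fin.



Lemma pow_mono_ge1 L1 L2 n : 1 <= L1 -> L1 <= L2 -> L1 ^ n <= L2 ^ n.
Proof. intros h1 h2. apply pow_incr. lra. Qed.

Lemma div_pow_mono c L1 L2 n : 0 <= c -> 1 <= L1 -> L1 <= L2 -> c / L2 ^ n <= c / L1 ^ n.
Proof.
  intros hc h1 h2. unfold Rdiv. apply Rmult_le_compat_l; auto.
  apply Rinv_le_contravar. apply pow_lt; lra. apply pow_mono_ge1; auto.
Qed.

Lemma fR_bound v t : 0 < t -> 0 <= fR v t <= 2 / t.
Proof.
  intros ht. unfold fR. pose proof (Rabs_pos (cos (th v t))). pose proof (COS_bound (th v t)).
  assert (Rabs (cos (th v t)) <= 1) by (apply Rabs_le; lra).
  split. apply Rdiv_le_0_compat; lra.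
  unfold Rdiv. apply Rmult_le_compat_r. apply Rlt_le, Rinv_0_lt_compat; lra. lra.
Qed.

Lemma EEf_bound (a : R) (r : nat) (T1 v T t : R)
  (hpi : forall t, T1 <= t -> Rabs (prime_pi t - li t) <= a * t / (ln t) ^ r) :
  0 < a -> T1 <= T -> 1 <= ln T -> T <= t -> Rabs (EE t * fR v t) <= 2 * a / (ln T) ^ r.
Proof.
  intros ha h1 h2 h3.
  assert (ht : 0 < t).
  { destruct (Rle_dec t 0). rewrite ln_nonpos in h2. lra. destruct (Rle_dec T 0); lra. lra. }
  assert (hlt : ln T <= ln t).
  { destruct (Req_dec T t). subst; lra. assert (0 < T).
    { destruct (Rle_dec T 0). rewrite ln_nonpos in h2; lra. lra. }
    left. apply ln_increasing; lra. }
  rewrite Rabs_mult. destruct (fR_bound v t ht).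
  rewrite (Rabs_pos_eq (fR v t)) by auto.
  eapply Rle_trans. apply Rmult_le_compat. apply Rabs_pos. auto.
  apply hpi; lra. exact H0.
  replace (a * t / ln t ^ r * (2 / t)) with (2 * a / ln t ^ r).
  apply div_pow_mono; lra. field. split. lra. apply pow_nonzero; lra.
Qed.

Lemma ln_mono_le x y : 0 < x -> x <= y -> ln x <= ln y.
Proof.
  intros h1 h2. destruct (Req_dec x y). subst; lra. left; apply ln_increasing; lra.
Qed.

Lemma analytic (a : R) (r : nat) (T1 v T y x : R)
  (hpi : forall t, T1 <= t -> Rabs (prime_pi t - li t) <= a * t / (ln t) ^ r) :
  0 < a -> (2 <= r)%nat -> 2 <= T1 -> 0 < v -> v <= 1 -> T1 <= T -> 1 <= ln T ->
  T <= y -> y <= x ->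
  prime_sum (fun n => fR v (INR n)) x - prime_sum (fun n => fR v (INR n)) y
  <= 4 / PI * (ln (ln x) - ln (ln y)) + 4 * frak_m / (v * ln y)
     + 4 * a / (ln T) ^ r + a * cc / (INR (r - 1) * (ln T) ^ (r - 1)).
Proof.
  intros ha hr hT1 hv hv1 h1 h2 h3 h4.
  pose proof (CC_all v a r T1 hv hv1 hT1 hpi y x ltac:(lra) h4) as HC.
  unfold CC in HC. rewrite RInt_Bd in HC by (auto; lra).
  assert (hly : ln T <= ln y) by (apply ln_mono_le; lra).
  assert (hlx : ln y <= ln x) by (apply ln_mono_le; lra).
  pose proof (EEf_bound a r T1 v T x hpi ha h1 h2 ltac:(lra)) as Ex.
  pose proof (EEf_bound a r T1 v T y hpi ha h1 h2 ltac:(lra)) as Ey.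
  apply Rabs_le_between in Ex. apply Rabs_le_between in Ey.
  pose proof frak_m_nonneg as hm.
  assert (Hx : Hth (th v x) / (v * ln x) <= 2 * frak_m / (v * ln x)).
  { unfold Rdiv. apply Rmult_le_compat_r. apply Rlt_le, Rinv_0_lt_compat; pos.
    pose proof (Hth_bound (th v x)). apply Rabs_le_between in H. lra. }
  assert (Hy : - (Hth (th v y) / (v * ln y)) <= 2 * frak_m / (v * ln y)).
  { unfold Rdiv. rewrite Ropp_mult_distr_l. apply Rmult_le_compat_r. apply Rlt_le, Rinv_0_lt_compat; pos.
    pose proof (Hth_bound (th v y)). apply Rabs_le_between in H. lra. }
  destruct r as [|[|r2]]; try lia.
  replace (S (S r2) - 1)%nat with (S r2) in * by lia.
  unfold FB in HC. replace (S (S r2) - 1)%nat with (S r2) in HC by lia.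
  assert (hI : 0 < INR (S r2)) by (apply lt_0_INR; lia).
  assert (Hp : a * cc / (INR (S r2) * ln y ^ S r2) <= a * cc / (INR (S r2) * ln T ^ S r2)).
  { unfold Rdiv. apply Rmult_le_compat_l. unfold cc; lra.
    apply Rinv_le_contravar. pos. apply Rmult_le_compat_l. lra. apply pow_mono_ge1; lra. }
  assert (Hp2 : 0 <= a * cc / (INR (S r2) * ln x ^ S r2)).
  { apply Rdiv_le_0_compat. unfold cc; lra. pos. }
  assert (e1 : 2 * frak_m / (v * ln x) = 2 * frak_m / v / ln x) by (field; lra).
  assert (e2 : 2 * frak_m / (v * ln y) = 2 * frak_m / v / ln y) by (field; lra).
  assert (e3 : 4 * frak_m / (v * ln y) = 2 * (2 * frak_m / v / ln y)) by (field; lra).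
  unfold WW in HC. rewrite e3. rewrite e1 in Hx. rewrite e2 in Hy.
  assert (e4 : 4 * a / ln T ^ S (S r2) = 2 * (2 * a / ln T ^ S (S r2))) by (field; apply pow_nonzero; lra).
  rewrite e4.
  unfold Rminus in HC |- *. rewrite Ropp_div in HC. lra.
Qed.

Lemma ptest_prime n : ptest n = 1 -> prime (Z.of_nat n).
Proof. unfold ptest. destruct (prime_dec (Z.of_nat n)); auto. intros; lra. Qed.

Lemma ptest_pos n : ptest n = 1 -> 0 < INR n.
Proof.
  intros h. apply ptest_prime in h. destruct h as [h _]. apply lt_0_INR. lia.
Qed.

Lemma S_eq v x : prime_sum (fun p => Cmod (tau p v) / INR p) x = prime_sum (fun n => fR v (INR n)) x.
Proof.
  apply prime_sum_ext. intros n. destruct (ptest_01 n) as [e|e]; rewrite e. ring.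
  rewrite Cmod_tau_prime by (apply ptest_prime; auto). unfold fR, th. reflexivity.
Qed.

Lemma mertens_part (b : R) (s : nat) (T2 v y : R)
  (hmert : forall t, T2 <= t -> prime_sum (fun p => / INR p) t <= ln (ln t) + MM_B + b / (ln t) ^ s) :
  T2 <= y -> prime_sum (fun n => fR v (INR n)) y <= 2 * (ln (ln y) + MM_B + b / (ln y) ^ s).
Proof.
  intros hy. apply Rle_trans with (prime_sum (fun n => 2 * / INR n) y).
  - apply prime_sum_le. intros n hn. pose proof (ptest_pos n hn).
    destruct (fR_bound v (INR n) H). unfold Rdiv in H1. lra.
  - rewrite prime_sum_scal. apply Rmult_le_compat_l. lra. apply hmert; auto.
Qed.

Lemma exp_mono_le x y : x <= y -> exp x <= exp y.
Proof. intros h. destruct (Req_dec x y). subst; lra. left; apply exp_increasing; lra. Qed.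

Theorem lemma16
  (a : R) (r : nat) (T1 : R) (b : R) (s : nat) (T2 : R)
  (ha : 0 < a) (hr : (2 <= r)%nat) (hT1 : 2 <= T1)
  (hpi : forall t, T1 <= t -> Rabs (prime_pi t - li t) <= a * t / (ln t) ^ r)
  (hb : 0 < b) (hs : (1 <= s)%nat) (hT2 : 2 <= T2)
  (hmert : forall t, T2 <= t ->
     prime_sum (fun p => / INR p) t <= ln (ln t) + MM_B + b / (ln t) ^ s)
  (q T x v : R) (hq : 1 <= q)
  (hT : Rmax (exp q) (Rmax T1 T2) <= T) (hTx : T <= x) (hv : 0 <= v <= 1) :
  let S := prime_sum (fun p => Cmod (tau p v) / INR p) x in
  let M := 2 * MM_B + 4 * a * zeta r / (2 * PI) ^ r
           + 14 * a / (ln T) ^ r + 2 * b / (ln T) ^ s in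
  (v <= q / ln x -> S < M + 2 * ln (ln x)) /\
  (q / ln x <= v <= q / ln T ->
     S < M + (4 / PI * ln (ln x) - (2 - 4 / PI) * ln (v / q) + 4 * frak_m / q)) /\
  (q / ln T <= v ->
     S < M + (4 / PI * ln (ln x) + 4 / PI * ln (v / q) + 2 * ln (ln T) + 4 * frak_m / q)).
Proof.
  intros S M.
  pose proof (Rmax_l (exp q) (Rmax T1 T2)). pose proof (Rmax_r (exp q) (Rmax T1 T2)).
  pose proof (Rmax_l T1 T2). pose proof (Rmax_r T1 T2).
  assert (hTq : exp q <= T) by lra. assert (hTT1 : T1 <= T) by lra. assert (hTT2 : T2 <= T) by lra.
  pose proof (exp_pos q).
  assert (hLT : q <= ln T) by (rewrite <- (ln_exp q); apply ln_mono_le; lra).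
  assert (hLx : ln T <= ln x) by (apply ln_mono_le; lra).
  set (L := ln T) in *.
  assert (hS : S = prime_sum (fun n => fR v (INR n)) x) by apply S_eq.
  pose proof (numeric a L r ha ltac:(lra) hr) as HN.
  pose proof PI_pos' as hPI.
  pose proof frak_m_nonneg as hm.
  assert (hz : 0 <= 4 * a * zeta r / (2 * PI) ^ r).
  { pose proof (zeta_ge1 r hr). apply Rdiv_le_0_compat. assert (0 < 4 * a) by lra. assert (0 < 4 * a * zeta r) by (apply Rmult_lt_0_compat; lra). lra. apply pow_lt; lra. }
  assert (h14 : 0 < 14 * a / L ^ r) by (apply Rdiv_lt_0_compat; pos).
  assert (hbm : forall y, T <= y -> b / ln y ^ s <= b / L ^ s).
  { intros y hy. apply div_pow_mono; try lra. apply ln_mono_le; lra. }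
  assert (hcc : 0 <= a * cc / (INR (r - 1) * L ^ (r - 1))).
  { apply Rdiv_le_0_compat. unfold cc; lra. apply Rmult_lt_0_compat.
    apply lt_0_INR; lia. pos. }
  unfold M. split; [|split].
  - intros _. rewrite hS.
    pose proof (mertens_part b s T2 v x hmert ltac:(lra)).
    pose proof (hbm x hTx). lra.
  - intros [h1 h2].
    assert (hv0 : 0 < v).
    { eapply Rlt_le_trans; [|exact h1]. apply Rdiv_lt_0_compat; lra. }
    set (y := exp (q / v)).
    assert (hly : ln y = q / v) by (unfold y; apply ln_exp).
    assert (hLpos : 0 < L) by lra.
    assert (hvL : v * L <= q).
    { apply Rmult_le_reg_r with (/ L). apply Rinv_0_lt_compat; lra.
      replace (v * L * / L) with v by (field; lra). exact h2. }
    assert (hvx : q <= v * ln x).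
    { apply Rmult_le_reg_r with (/ ln x). apply Rinv_0_lt_compat; lra.
      replace (v * ln x * / ln x) with v by (field; lra). exact h1. }
    assert (hTy : T <= y).
    { rewrite <- (exp_ln T) by lra. unfold y. apply exp_mono_le.
      apply Rmult_le_reg_r with v; auto. unfold Rdiv. rewrite Rmult_assoc, Rinv_l by lra. fold L. lra. }
    assert (hyx : y <= x).
    { rewrite <- (exp_ln x) by lra. unfold y. apply exp_mono_le.
      apply Rmult_le_reg_r with v; auto. unfold Rdiv. rewrite Rmult_assoc, Rinv_l by lra. lra. }
    pose proof (mertens_part b s T2 v y hmert ltac:(lra)) as HM.
    pose proof (hbm y hTy) as HB.
    pose proof (analytic a r T1 v T y x hpi ha hr hT1 hv0 (proj2 hv) hTT1 ltac:(fold L; lra) hTy hyx) as HA.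
    fold L in HA. rewrite hly in HA, HM, HB.
    assert (e1 : 4 * frak_m / (v * (q / v)) = 4 * frak_m / q) by (field; lra).
    assert (e2 : ln (v / q) = - ln (q / v)).
    { replace (v / q) with (/ (q / v)) by (field; lra). apply ln_Rinv. apply Rdiv_lt_0_compat; lra. }
    rewrite e1 in HA. rewrite e2. rewrite hS. lra.
  - intros h. assert (hLpos : 0 < L) by lra.
    assert (hv0 : 0 < v).
    { eapply Rlt_le_trans; [|exact h]. apply Rdiv_lt_0_compat; lra. }
    assert (hvL : q <= v * L).
    { apply Rmult_le_reg_r with (/ L). apply Rinv_0_lt_compat; lra.
      replace (v * L * / L) with v by (field; lra). exact h. }
    pose proof (mertens_part b s T2 v T hmert ltac:(lra)) as HM.
    pose proof (analytic a r T1 v T T x hpi ha hr hT1 hv0 (proj2 hv) hTT1 ltac:(fold L; lra) ltac:(lra) hTx) as HA.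
    fold L in HA, HM.
    assert (hmq : 4 * frak_m / (v * L) <= 4 * frak_m / q).
    { unfold Rdiv. apply Rmult_le_compat_l. lra. apply Rinv_le_contravar; lra. }
    assert (hln : 0 <= ln (v / q) + ln L).
    { rewrite <- ln_mult by (try apply Rdiv_lt_0_compat; lra).
      rewrite <- ln_1. apply ln_mono_le. lra.
      apply Rmult_le_reg_r with q. lra. unfold Rdiv.
      replace (v * / q * L * q) with (v * L) by (field; lra). lra. }
    assert (h4pi : 0 < 4 / PI) by (apply Rdiv_lt_0_compat; lra).
    assert (0 <= 4 / PI * (ln (v / q) + ln L)) by (apply Rmult_le_pos; lra).
    rewrite hS. lra.
Qed.
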